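(* Let $T\in[0,\infty]$. For every $\pi\in\Pi$ with $J_T(\pi)<\infty$ and every $\delta_{\mathrm{tol}}>0$ there exists a periodic strategy $\hat\pi\in\Pi$ such that $$J_T(\hat\pi)\le J_T(\pi)+\delta_{\mathrm{tol}}.$$
   Context: Let $G=(V,E,A,\phi)$ be a finite connected undirected graph with node set $V$, edge set $E$, edge lengths $A:E\to\mathbb{R}_{>0}$ and node weights $\phi:V\to\mathbb{R}_{>0}$. Let $|G|$ be its metric graph (each edge $e$ a closed interval of length $A(e)$ glued at its endpoints) with shortest-path metric $d$. Fix $k\ge1$ robots $r_1,\dots,r_k$; $d_k(p,p')=\max_i d(p_i,p'_i)$ on $|G|^k$. Feasible strategies: $\Pi=\{\pi\in C([0,\infty),|G|^k):\ d_k(\pi(t),\pi(t'))\le|t-t'|\ \forall t,t'\ge0\}$, $\pi=(\pi_{r_1},\dots,\pi_{r_k})$. A strategy $\pi$ is periodic if there exist $t^*\ge0$ and $0<W<\infty$ with $\pi(t^*+t+W)=\pi(t^*+t)$ for all $t\ge0$. For $v\in V$, $t\ge0$: $\tau^\pi(v,t)=\sup\{t'\le t:\pi_r(t')=v\text{ for some }r\}$ if nonempty, else $0$; $L^\pi_v(t)=t-\tau^\pi(v,t)$; $M^\pi(t)=\max_v\phi(v)L^\pi_v(t)$. For finite $T\ge0$, $J_T(\pi)=\sup_{t\ge T}M^\pi(t)$; $J_\infty(\pi)=\limsup_{t\to\infty}M^\pi(t)$. *)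

(* Defs.v *)
From Stdlib Require Import Reals ClassicalEpsilon.
From mathcomp Require Import ssreflect ssrbool eqtype choice fintype seq.
From Coquelicot Require Import Coquelicot.

Set Implicit Arguments.
Unset Strict Implicit.
Local Open Scope R_scope.

Section MetricGraph.

(* A finite undirected (multi)graph: each edge e joins [src e] and [dst e]. *)
Variables (V E : finType) (src dst : E -> V) (A : E -> R).

Fixpoint is_walk (x y : V) (w : list E) : Prop :=
  match w with
  | nil => x = y
  | e :: w' => (src e = x /\ is_walk (dst e) y w') \/
               (dst e = x /\ is_walk (src e) y w')
  end.

Fixpoint walk_length (w : list E) : R :=
  match w with nil => 0 | e :: w' => A e + walk_length w' end.

Definition connected_graph : Prop := forall u v : V, exists w, is_walk u v w.

(* Points of the metric graph |G|: a node, or an interior point of an edge e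
   at distance s from src e (0 < s < A e).  Edge endpoints are the nodes. *)
Inductive point : Type :=
  | PNode (v : V)
  | PEdge (e : E) (s : R) (Hs : 0 < s < A e).

Definition ends (p : point) : list (V * R) :=
  match p with
  | PNode v => (v, 0) :: nil
  | PEdge e s _ => (src e, s) :: (dst e, A e - s) :: nil
  end.

(* Lengths of the (canonical) routes between two points of |G|:
   either directly along a common edge, or leaving p through an endpoint,
   following a walk of the graph, and entering q through an endpoint. *)
Definition route_length (p q : point) (l : R) : Prop :=
  (exists e s s' Hs Hs', p = @PEdge e s Hs /\ q = @PEdge e s' Hs' /\ l = Rabs (s - s'))
  \/ (exists x a y b w, List.In (x, a) (ends p) /\ List.In (y, b) (ends q) /\
        is_walk x y w /\ l = a + walk_length w + b).

Definition dist (p q : point) : R := real (Glb_Rbar (route_length p q)).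

(* Robots are indexed by i < k; a configuration is a map nat -> point
   (only the indices i < k are meaningful). *)
Definition config := nat -> point.

Definition dk (k : nat) (p q : config) : R :=
  List.fold_right Rmax 0 (List.map (fun i => dist (p i) (q i)) (List.seq 0 k)).

Definition feasible (k : nat) (pi : R -> config) : Prop :=
  (forall t, 0 <= t -> forall eps, 0 < eps -> exists del, 0 < del /\
     forall t', 0 <= t' -> Rabs (t' - t) < del -> dk k (pi t) (pi t') < eps) /\
  (forall t t', 0 <= t -> 0 <= t' -> dk k (pi t) (pi t') <= Rabs (t - t')).

Definition periodic (k : nat) (pi : R -> config) : Prop :=
  exists tstar W, 0 <= tstar /\ 0 < W /\
    forall t, 0 <= t -> forall i, Nat.lt i k ->
      pi (tstar + t + W) i = pi (tstar + t) i.

Definition visit_times (k : nat) (pi : R -> config) (v : V) (t : R) (t' : R) : Prop :=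
  0 <= t' /\ t' <= t /\ exists i, Nat.lt i k /\ pi t' i = PNode v.

Definition tau (k : nat) (pi : R -> config) (v : V) (t : R) : R :=
  match excluded_middle_informative (exists t', visit_times k pi v t t') with
  | left _ => real (Lub_Rbar (visit_times k pi v t))
  | right _ => 0
  end.

Definition latency (k : nat) (pi : R -> config) (v : V) (t : R) : R :=
  t - tau k pi v t.

Variable phi : V -> R.

(* M^pi(t) = max_v phi(v) L_v(t)  (all terms are >= 0). *)
Definition Mcost (k : nat) (pi : R -> config) (t : R) : R :=
  List.fold_right Rmax 0 (List.map (fun v => phi v * latency k pi v t) (enum V)).

(* J_T for T in [0,oo]: sup_{t >= T} M(t) for finite T,
   limsup_{t -> oo} M(t) = inf_{s >= 0} sup_{t >= s} M(t) for T = oo. *)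
Definition sup_from (k : nat) (pi : R -> config) (s : R) : Rbar :=
  Lub_Rbar (fun x => exists t, s <= t /\ x = Mcost k pi t).

Definition Jcost (T : Rbar) (k : nat) (pi : R -> config) : Rbar :=
  match T with
  | Finite r => sup_from k pi r
  | _ => Rbar_glb (fun y => exists s, 0 <= s /\ y = sup_from k pi s)
  end.

End MetricGraph.

(* Main.v *)
Require Import Defs.
From Stdlib Require Import Reals Lra ClassicalEpsilon Classical FunctionalExtensionality PropExtensionality.
From mathcomp Require Import ssreflect ssrbool eqtype choice fintype seq finfun ssrnat.
From Stdlib Require Import Lia ZArith.
From Coquelicot Require Import Coquelicot.
Local Open Scope list_scope.
Local Open Scope R_scope.

Section Metric.
Variables (V E : finType) (src dst : E -> V) (A : E -> R).
Hypothesis HA : forall e, 0 < A e.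
Hypothesis Hconn : connected_graph src dst.

Local Notation pt := (point V A).
Local Notation d := (@Defs.dist V E src dst A).
Local Notation route := (@route_length V E src dst A).

Lemma walk_app {x y z w1 w2} : is_walk src dst x y w1 -> is_walk src dst y z w2 ->
  is_walk src dst x z (w1 ++ w2).
Proof.
  revert x; induction w1 as [|e w IH]; intros x H1 H2; simpl in *.
  - subst; auto.
  - destruct H1 as [[? H]|[? H]]; [left|right]; split; auto.
Qed.

Lemma walk_length_app w1 w2 : walk_length A (w1 ++ w2) = walk_length A w1 + walk_length A w2.
Proof. induction w1; simpl; [lra| rewrite IHw1; lra]. Qed.

Lemma walk_length_nonneg w : 0 <= walk_length A w.
Proof. induction w; simpl; [lra| specialize (HA a); lra]. Qed.

Lemma ends_nonneg {p : pt} {x a} : List.In (x, a) (ends src dst p) -> 0 <= a.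
Proof.
  destruct p as [v|e s Hs]; simpl; intros H.
  - destruct H as [H|[]]; inversion H; lra.
  - destruct H as [H|[H|[]]]; inversion H; lra.
Qed.

Lemma route_nonneg {p q l} : route p q l -> 0 <= l.
Proof.
  intros [(e&s&s'&Hs&Hs'&_&_&->)|(x&a&y&b&w&Ha&Hb&_&->)].
  - apply Rabs_pos.
  - have := ends_nonneg Ha; have := ends_nonneg Hb; have := walk_length_nonneg w; lra.
Qed.

Lemma ends_ne (p : pt) : exists x a, List.In (x, a) (ends src dst p).
Proof. destruct p; simpl; eexists; eexists; left; reflexivity. Qed.

Lemma route_exists p q : exists l, route p q l.
Proof.
  destruct (ends_ne p) as (x&a&Ha); destruct (ends_ne q) as (y&b&Hb).
  destruct (Hconn x y) as [w Hw].
  exists (a + walk_length A w + b); right; exists x, a, y, b, w; auto.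
Qed.

Lemma glb_fin p q : Glb_Rbar (route p q) = Finite (d p q).
Proof.
  destruct (Glb_Rbar_correct (route p q)) as [Hlb Hg].
  destruct (route_exists p q) as [l Hl].
  have H0 : Rbar_le (Finite 0) (Glb_Rbar (route p q)).
  { apply Hg; intros x Hx; simpl; exact (route_nonneg Hx). }
  have H1 := Hlb l Hl.
  unfold Defs.dist; destruct (Glb_Rbar (route p q)); simpl in *; tauto.
Qed.

Lemma dist_le {p q l} : route p q l -> d p q <= l.
Proof.
  intros Hl; destruct (Glb_Rbar_correct (route p q)) as [Hlb _].
  have := Hlb l Hl; rewrite glb_fin; simpl; auto.
Qed.

Lemma dist_approx p q eps : 0 < eps -> exists l, route p q l /\ l < d p q + eps.
Proof.
  intros He; apply NNPP; intros Hn.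
  destruct (Glb_Rbar_correct (route p q)) as [_ Hg].
  have : Rbar_le (Finite (d p q + eps)) (Glb_Rbar (route p q)).
  { apply Hg; intros x Hx; simpl; apply Rnot_lt_le; intros Hlt; apply Hn; exists x; auto. }
  rewrite glb_fin; simpl; lra.
Qed.

Lemma walk_edge e : is_walk src dst (src e) (dst e) (e :: nil).
Proof. simpl; left; split; auto. Qed.
Lemma walk_edge' e : is_walk src dst (dst e) (src e) (e :: nil).
Proof. simpl; right; split; auto. Qed.

Definition eof (p : pt) : option E := match p with PNode _ => None | PEdge e _ _ => Some e end.
Definition sof (p : pt) : R := match p with PNode _ => 0 | PEdge _ s _ => s end.

Lemma route_trans {p q r l1 l2} : route p q l1 -> route q r l2 ->
  exists l, route p r l /\ l <= l1 + l2.
Proof.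
  intros [(e&s1&s&Hs1&Hs&Ep&Eq&El1)|(x&a&y&b&w1&Ha&Hb&Hw1&El1)]
         [(e'&s'&s2&Hs'&Hs2&Eq'&Er&El2)|(y'&b'&z&c&w2&Hb'&Hc&Hw2&El2)].
  -
    have He : Some e = Some e' by (have := f_equal eof Eq; rewrite Eq'; simpl; auto).
    have Hss : s = s' by (have := f_equal sof Eq; rewrite Eq'; simpl; auto).
    injection He as <-. subst.
    exists (Rabs (s1 - s2)); split.
    + left; exists e, s1, s2, Hs1, Hs2; auto.
    + have := Rabs_triang (s1 - s') (s' - s2). replace (s1 - s' + (s' - s2)) with (s1 - s2) by ring. lra.
  -
    subst q p l1 l2. simpl in Hb'.
    destruct Hb' as [Hb'|[Hb'|[]]]; injection Hb' as <- <-.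
    + exists (s1 + walk_length A w2 + c); split.
      * right; exists (src e), s1, z, c, w2; simpl; auto.
      * have := Rle_abs (s1 - s); have := Rle_abs (s - s1); rewrite (Rabs_minus_sym s s1); lra.
    + exists (A e - s1 + walk_length A w2 + c); split.
      * right; exists (dst e), (A e - s1), z, c, w2; simpl; auto.
      * have := Rle_abs (s1 - s); have := Rle_abs (s - s1); rewrite (Rabs_minus_sym s s1); lra.
  -
    subst q r l1 l2. simpl in Hb.
    destruct Hb as [Hb|[Hb|[]]]; injection Hb as <- <-.
    + exists (a + walk_length A w1 + s2); split.
      * right; exists x, a, (src e'), s2, w1; simpl; auto.
      * have := Rle_abs (s' - s2); have := Rle_abs (s2 - s'); rewrite (Rabs_minus_sym s2 s'); lra.
    + exists (a + walk_length A w1 + (A e' - s2)); split.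
      * right; exists x, a, (dst e'), (A e' - s2), w1; simpl; auto.
      * have := Rle_abs (s' - s2); have := Rle_abs (s2 - s'); rewrite (Rabs_minus_sym s2 s'); lra.
  -
    subst l1 l2.
    destruct q as [v|e s Hs]; simpl in Hb, Hb'.
    + destruct Hb as [Hb|[]]; destruct Hb' as [Hb'|[]]; injection Hb as <- <-; injection Hb' as <- <-.
      exists (a + walk_length A (w1 ++ w2) + c); split.
      * right; exists x, a, z, c, (w1 ++ w2); split; [exact Ha|split; [exact Hc|split; [apply (walk_app Hw1 Hw2)|reflexivity]]].
      * rewrite walk_length_app; lra.
    + have Hsame : forall w, is_walk src dst y y' w -> walk_length A w <= b + b' ->
        exists l, route p r l /\ l <= a + walk_length A w1 + b + (b' + walk_length A w2 + c).
      { intros w Hw Hwl. exists (a + walk_length A (w1 ++ w ++ w2) + c); split.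
        - right; exists x, a, z, c, (w1 ++ w ++ w2); split; [exact Ha|split; [exact Hc|split; [|reflexivity]]].
          apply (walk_app Hw1); apply (walk_app Hw Hw2).
        - rewrite !walk_length_app; lra. }
      have Hb0 := ends_nonneg (p := PEdge V Hs) (x := y) (a := b); simpl in Hb0.
      have Hb0' := ends_nonneg (p := PEdge V Hs) (x := y') (a := b'); simpl in Hb0'.
      have Hnil : forall u, is_walk src dst u u nil by (intros; simpl; auto).
      destruct Hb as [Hb|[Hb|[]]]; destruct Hb' as [Hb'|[Hb'|[]]];
        injection Hb as <- <-; injection Hb' as <- <-.
      * apply Hsame with nil; simpl; auto; lra.
      * apply Hsame with (e :: nil); [apply walk_edge|simpl; lra].
      * apply Hsame with (e :: nil); [apply walk_edge'|simpl; lra].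
      * apply Hsame with nil; simpl; auto; lra.
Qed.

Lemma dist_triangle p q r : d p r <= d p q + d q r.
Proof.
  apply Rnot_lt_le; intros Hlt.
  set eps := (d p r - d p q - d q r) / 2.
  have He : 0 < eps by (unfold eps; lra).
  destruct (dist_approx p q eps He) as (l1&H1&H1').
  destruct (dist_approx q r eps He) as (l2&H2&H2').
  destruct (route_trans H1 H2) as (l&Hl&Hl').
  have := dist_le Hl. unfold eps in *; lra.
Qed.

Lemma dist_edge {e s s'} (Hs : 0 < s < A e) (Hs' : 0 < s' < A e) :
  d (PEdge V Hs) (PEdge V Hs') <= Rabs (s - s').
Proof. apply dist_le; left; exists e, s, s', Hs, Hs'; auto. Qed.

Lemma dist_self p : d p p <= 0.
Proof.
  destruct p as [v|e s Hs].
  - have : route (PNode A v) (PNode A v) 0.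
    { right; exists v, 0, v, 0, nil; simpl; repeat split; auto; lra. }
    apply dist_le.
  - have := dist_edge Hs Hs. replace (s - s) with 0 by ring. rewrite Rabs_R0; auto.
Qed.

End Metric.


Lemma lub_spec (S : R -> Prop) t : (exists x, S x) -> (forall x, S x -> x <= t) ->
  Lub_Rbar S = Finite (real (Lub_Rbar S)) /\
  (forall x, S x -> x <= real (Lub_Rbar S)) /\ real (Lub_Rbar S) <= t /\
  (forall eta, 0 < eta -> exists x, S x /\ real (Lub_Rbar S) - eta < x).
Proof.
  intros [x0 Hx0] Hub.
  destruct (Lub_Rbar_correct S) as [Hu Hl].
  have H1 : Rbar_le (Lub_Rbar S) (Finite t) by (apply Hl; intros x Hx; simpl; auto).
  have H2 := Hu x0 Hx0.
  destruct (Lub_Rbar S) as [L| |] eqn:EL; simpl in H1, H2; try tauto.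
  simpl; split; [reflexivity|split; [|split]].
  - intros x Hx; have := Hu x Hx; simpl; auto.
  - auto.
  - intros eta He; apply NNPP; intros Hn.
    have : Rbar_le (Finite L) (Finite (L - eta)).
    { apply Hl; intros x Hx; simpl; apply Rnot_lt_le; intros Hlt; apply Hn; exists x; auto. }
    simpl; lra.
Qed.

Lemma lub_le (S : R -> Prop) c : (forall x, S x -> x <= c) -> Rbar_le (Lub_Rbar S) (Finite c).
Proof. intros H; destruct (Lub_Rbar_correct S) as [_ Hl]; apply Hl; intros x Hx; simpl; auto. Qed.

Lemma lub_ge (S : R -> Prop) x : S x -> Rbar_le (Finite x) (Lub_Rbar S).
Proof. intros H; destruct (Lub_Rbar_correct S) as [Hu _]; apply Hu; auto. Qed.

Section Fold.
Variable (T : Type).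
Lemma fold_max_ge (f : T -> R) l x : List.In x l -> f x <= List.fold_right Rmax 0 (List.map f l).
Proof.
  induction l as [|y l IH]; simpl; [tauto|].
  intros [->|H]; [apply Rmax_l|]. eapply Rle_trans; [apply IH; auto| apply Rmax_r].
Qed.
Lemma fold_max_nonneg (f : T -> R) l : 0 <= List.fold_right Rmax 0 (List.map f l).
Proof. induction l; simpl; [lra|]. eapply Rle_trans; [apply IHl|apply Rmax_r]. Qed.
Lemma fold_max_le (f : T -> R) l c : 0 <= c -> (forall x, List.In x l -> f x <= c) ->
  List.fold_right Rmax 0 (List.map f l) <= c.
Proof.
  intros Hc; induction l as [|y l IH]; simpl; intros H; [lra|].
  apply Rmax_lub; auto.
Qed.
End Fold.

Section Tau.
Variables (V E : finType) (A : E -> R) (k : nat).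

Lemma tau_bound (f : R -> config V A) v t : 0 <= t -> 0 <= tau k f v t <= t.
Proof.
  intros Ht; unfold tau.
  destruct (excluded_middle_informative _) as [Hex|Hn]; [|lra].
  have Hb : forall x, visit_times k f v t x -> x <= t by (intros y (_&Hy&_); auto).
  destruct (lub_spec _ t Hex Hb) as (_&Hmem&Hle&_).
  destruct Hex as [x Hx]; have := Hmem x Hx; destruct Hx as (Hx0&_); lra.
Qed.

Lemma tau_visit (f : R -> config V A) v t x : 0 <= x -> x <= t ->
  (exists i, Nat.lt i k /\ f x i = PNode A v) -> x <= tau k f v t.
Proof.
  intros H0 H1 H2; have Hx : visit_times k f v t x by (split; [|split]; auto).
  unfold tau; destruct (excluded_middle_informative _) as [Hex|Hn].
  - have Hb : forall x, visit_times k f v t x -> x <= t by (intros y (_&Hy&_); auto).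
    destruct (lub_spec _ t Hex Hb) as (_&Hmem&_&_); auto.
  - exfalso; apply Hn; exists x; auto.
Qed.

Lemma tau_approx (f : R -> config V A) v t eta : (exists x, visit_times k f v t x) -> 0 < eta ->
  exists x, visit_times k f v t x /\ tau k f v t - eta < x.
Proof.
  intros Hex He; unfold tau; destruct (excluded_middle_informative _) as [Hex'|Hn]; [|tauto].
  have Hb : forall x, visit_times k f v t x -> x <= t by (intros y (_&Hy&_); auto).
  destruct (lub_spec _ t Hex' Hb) as (_&_&_&Ha); auto.
Qed.

Lemma tau_none (f : R -> config V A) v t : ~ (exists x, visit_times k f v t x) -> tau k f v t = 0.
Proof. intros Hn; unfold tau; destruct (excluded_middle_informative _); tauto. Qed.

Lemma tau_ext (f g : R -> config V A) v t1 t2 :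
  (forall x, visit_times k f v t1 x <-> visit_times k g v t2 x) -> tau k f v t1 = tau k g v t2.
Proof.
  intros H.
  have Heq : visit_times k f v t1 = visit_times k g v t2.
  { apply functional_extensionality; intros x; apply propositional_extensionality; auto. }
  unfold tau; rewrite Heq; reflexivity.
Qed.

Lemma tau_mono (f : R -> config V A) v t t' : 0 <= t' -> t' <= t -> tau k f v t' <= tau k f v t.
Proof.
  intros H0 H1.
  destruct (classic (exists x, visit_times k f v t' x)) as [Hex|Hn].
  - apply Rnot_lt_le; intros Hlt.
    have He : 0 < tau k f v t' - tau k f v t by lra.
    destruct (tau_approx _ _ _ _ Hex He) as (x&(Hx0&Hx1&Hx2)&Hx).
    have := tau_visit f v t x Hx0 (Rle_trans _ _ _ Hx1 H1) Hx2. lra.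
  - rewrite (tau_none _ _ _ Hn). have := tau_bound f v t (Rle_trans _ _ _ H0 H1); lra.
Qed.

End Tau.

Section Lip.
Variables (V E : finType) (src dst : E -> V) (A : E -> R).
Hypothesis HA : forall e, 0 < A e.
Hypothesis Hconn : connected_graph src dst.
Local Notation pt := (point V A).
Local Notation d := (@Defs.dist V E src dst A).

Definition LipOn (g : R -> pt) x y := forall t t', x <= t <= y -> x <= t' <= y ->
  d (g t) (g t') <= Rabs (t - t').

Lemma abs3 a b c : (a <= b <= c \/ c <= b <= a) -> Rabs (a - b) + Rabs (b - c) = Rabs (a - c).
Proof.
  intros H; unfold Rabs; repeat destruct (Rcase_abs _); lra.
Qed.

Lemma lip_glue g x y z : LipOn g x y -> LipOn g y z -> LipOn g x z.
Proof.
  intros H1 H2 t t' Ht Ht'.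
  destruct (Rle_lt_dec t y); destruct (Rle_lt_dec t' y).
  - apply H1; lra.
  - eapply Rle_trans; [apply (@dist_triangle V E src dst A HA Hconn (g t) (g y) (g t'))|].
    have := H1 t y ltac:(lra) ltac:(lra); have := H2 y t' ltac:(lra) ltac:(lra).
    rewrite -(abs3 t y t'); lra.
  - eapply Rle_trans; [apply (@dist_triangle V E src dst A HA Hconn (g t) (g y) (g t'))|].
    have := H2 t y ltac:(lra) ltac:(lra); have := H1 y t' ltac:(lra) ltac:(lra).
    rewrite -(abs3 t y t'); lra.
  - apply H2; lra.
Qed.

Lemma lip_shift g x y c : LipOn g x y -> (forall t, x <= t <= y -> g (t + c) = g t) ->
  LipOn g (x + c) (y + c).
Proof.
  intros H Hp t t' Ht Ht'.
  replace t with ((t - c) + c) by ring; replace t' with ((t' - c) + c) by ring.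
  rewrite !Hp; try lra. replace (t - c + c - (t' - c + c)) with ((t - c) - (t' - c)) by ring.
  apply H; lra.
Qed.

Lemma lip_periodic g b P : 0 < P -> LipOn g b (b + P) -> (forall t, b <= t -> g (t + P) = g t) ->
  forall n : nat, LipOn g b (b + INR n * P).
Proof.
  intros HP H Hp; induction n as [|n IH].
  - simpl; intros t t' Ht Ht'. replace t with b by lra; replace t' with b by lra.
    replace (b - b) with 0 by ring; rewrite Rabs_R0. apply (@dist_self V E src dst A HA Hconn).
  - apply lip_glue with (b + INR n * P); auto.
    have Hn : 0 <= INR n by apply pos_INR.
    replace (b + INR n * P) with (b + INR n * P) by ring.
    rewrite S_INR.
    have Hiter : forall m : nat, forall t, b <= t -> g (t + INR m * P) = g t.
    { intros m; induction m as [|m IHm]; intros t Ht.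
      - simpl; replace (t + 0 * P) with t by ring; auto.
      - rewrite S_INR. replace (t + (INR m + 1) * P) with ((t + INR m * P) + P) by ring.
        rewrite Hp; [apply IHm; auto|]. have := pos_INR m; nra. }
    replace (b + (INR n + 1) * P) with ((b + P) + INR n * P) by ring.
    apply lip_shift; auto.
    intros t Ht; apply Hiter; lra.
Qed.

End Lip.

Lemma in_In {T : eqType} (x : T) (s : seq.seq T) : x \in s -> List.In x s.
Proof.
  elim: s => [|y s IH] //=. rewrite seq.in_cons => /orP [/eqP ->|H]; [left|right; auto]; auto.
Qed.

Lemma Int_part_unique x z : IZR z <= x < IZR z + 1 -> Int_part x = z.
Proof.
  intros [H1 H2]. unfold Int_part.
  have : (z + 1)%Z = up x.
  { apply tech_up; rewrite plus_IZR; lra. }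
  lia.
Qed.

Lemma Int_part_nonneg x : 0 <= x -> (0 <= Int_part x)%Z.
Proof.
  intros Hx; destruct (base_Int_part x) as [H1 H2].
  have : (-1 < Int_part x)%Z. { apply lt_IZR; lra. } lia.
Qed.

Lemma div_le1 x y : 0 < y -> x <= y -> x / y <= 1.
Proof. intros; apply (Rmult_le_reg_r y); auto; replace (x / y * y) with x by (field; lra); lra. Qed.

Section Main.
Variables (V E : finType) (src dst : E -> V) (A : E -> R) (phi : V -> R).
Hypothesis HA : forall e, 0 < A e.
Hypothesis Hphi : forall v, 0 < phi v.
Hypothesis Hconn : connected_graph src dst.
Variable k : nat.
Variable pi : R -> config V A.
Hypothesis Hpi : feasible src dst k pi.

Local Notation pt := (point V A).
Local Notation d := (@Defs.dist V E src dst A).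

Lemma pi_lip i : Nat.lt i k -> forall t t', 0 <= t -> 0 <= t' -> d (pi t i) (pi t' i) <= Rabs (t - t').
Proof.
  intros Hi t t' Ht Ht'. have := proj2 Hpi t t' Ht Ht'. unfold dk.
  have Hin : List.In i (List.seq 0 k) by (apply List.in_seq; lia).
  have := fold_max_ge _ (fun j => d (pi t j) (pi t' j)) _ _ Hin. simpl. lra.
Qed.

Lemma feasible_of (f : R -> config V A) :
  (forall i, Nat.lt i k -> forall t t', 0 <= t -> 0 <= t' -> d (f t i) (f t' i) <= Rabs (t - t')) ->
  feasible src dst k f.
Proof.
  intros H.
  have Hdk : forall t t', 0 <= t -> 0 <= t' -> dk src dst k (f t) (f t') <= Rabs (t - t').
  { intros t t' Ht Ht'; unfold dk; apply fold_max_le; [apply Rabs_pos|].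
    intros j Hj; apply List.in_seq in Hj; apply H; auto; lia. }
  split; auto.
  intros t Ht eps He; exists eps; split; auto.
  intros t' Ht' Hlt; have := Hdk t t' Ht Ht'. rewrite Rabs_minus_sym. lra.
Qed.

Definition tagp (p : pt) : (V + E)%type := match p with PNode v => inl v | PEdge e _ _ => inr e end.
Definition sofp (p : pt) : R := match p with PNode _ => 0 | PEdge _ s _ => s end.

Definition mkE (e : E) (s : R) : pt :=
  match Rlt_dec 0 s, Rlt_dec s (A e) with
  | left H1, left H2 => PEdge V (conj H1 H2)
  | _, _ => PNode A (src e)
  end.

Lemma mkE_eq e s (H : 0 < s < A e) : mkE e s = PEdge V H.
Proof.
  unfold mkE. destruct H as [H1' H2'].
  case: (Rlt_dec 0 s) => [H1|H1]; [|exfalso; lra].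
  case: (Rlt_dec s (A e)) => [H2|H2]; [|exfalso; lra].
  f_equal; apply proof_irrelevance.
Qed.

Lemma Mcost_nonneg (f : R -> config V A) t : 0 <= Mcost phi k f t.
Proof. apply fold_max_nonneg. Qed.

Lemma Mcost_ge (f : R -> config V A) t v : phi v * latency k f v t <= Mcost phi k f t.
Proof.
  unfold Mcost. apply (fold_max_ge _ (fun v => phi v * latency k f v t)).
  apply in_In. by rewrite mem_enum.
Qed.

Lemma Mcost_le (f : R -> config V A) t c : 0 <= c -> (forall v, phi v * latency k f v t <= c) -> Mcost phi k f t <= c.
Proof. intros Hc H; unfold Mcost; apply fold_max_le; auto. Qed.

Section Loop.
Variables (s0 B eps0 a b del : R).
Hypothesis Hs0 : 0 <= s0.
Hypothesis Ha : s0 <= a.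
Hypothesis Hab : a < b.
Hypothesis Hdel : 0 < del.
Hypothesis Htag : forall i, Nat.lt i k -> tagp (pi a i) = tagp (pi b i).
Hypothesis Hpos : forall i, Nat.lt i k -> Rabs (sofp (pi a i) - sofp (pi b i)) < del.
Hypothesis Hlat : forall v, latency k pi v b < latency k pi v a + del.
Hypothesis Hlatb : forall v, latency k pi v b < b - a.
Hypothesis HB : forall t, s0 <= t -> forall v, phi v * latency k pi v t <= B.
Hypothesis Heps : forall v, phi v * (3 * del) <= eps0.
Hypothesis HB0 : 0 <= B.
Hypothesis Heps0 : 0 <= eps0.

Definition trans (i : nat) (r : R) : pt :=
  match pi b i with
  | PNode v => PNode A v
  | PEdge e sb _ => mkE e (sb + (sofp (pi a i) - sb) * (r / del))
  end.

Definition P := b - a + del.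
Lemma P_pos : del < P. Proof. unfold P; lra. Qed.

Definition seg (r : R) : config V A := fun i => if Rlt_dec r del then trans i r else pi (a + r - del) i.
Definition rm (t : R) := t - b - P * IZR (Int_part ((t - b) / P)).
Definition pihat (t : R) : config V A := if Rle_dec t b then pi t else seg (rm t).

Lemma trans0 i : trans i 0 = pi b i.
Proof.
  unfold trans; destruct (pi b i) as [v|e s Hs]; auto.
  replace (s + (sofp (pi a i) - s) * (0 / del)) with s by (unfold Rdiv; ring). apply mkE_eq.
Qed.

Lemma trans_spec i : Nat.lt i k ->
  (exists v, pi b i = PNode A v /\ pi a i = PNode A v /\ forall r, trans i r = PNode A v) \/
  (exists e sa sb (Ha : 0 < sa < A e) (Hb : 0 < sb < A e), pi a i = PEdge V Ha /\ pi b i = PEdge V Hb /\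
     Rabs (sa - sb) < del /\ forall r, trans i r = mkE e (sb + (sa - sb) * (r / del))).
Proof.
  intros Hi. have Ht := Htag i Hi. have Hp := Hpos i Hi. unfold trans.
  destruct (pi b i) as [v|e sb Hsb] eqn:Eb; destruct (pi a i) as [v'|e' sa Hsa] eqn:Ea;
    simpl in Ht; try discriminate.
  - injection Ht as ->. left; exists v; auto.
  - injection Ht as ->. right; exists e, sa, sb, Hsa, Hsb; simpl in Hp; repeat split; auto.
Qed.

Lemma transD i : Nat.lt i k -> trans i del = pi a i.
Proof.
  intros Hi; destruct (trans_spec i Hi) as [(v&Hb&Ha'&Ht)|(e&sa&sb&Hsa&Hsb&Ea&Eb&_&Ht)].
  - rewrite Ht Ha'; auto.
  - rewrite Ht Ea. replace (sb + (sa - sb) * (del / del)) with sa by (field; lra). apply mkE_eq.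
Qed.

Lemma trans_lip i r r' : Nat.lt i k -> 0 <= r <= del -> 0 <= r' <= del ->
  d (trans i r) (trans i r') <= Rabs (r - r').
Proof.
  intros Hi Hr Hr'. destruct (trans_spec i Hi) as [(v&Hb&Ha'&Ht)|(e&sa&sb&Hsa&Hsb&Ea&Eb&Hd&Ht)].
  - rewrite !Ht. have := @dist_self V E src dst A HA Hconn (PNode A v). have := Rabs_pos (r - r'). lra.
  - rewrite !Ht.
    have Hin : forall x, 0 <= x <= del -> 0 < sb + (sa - sb) * (x / del) < A e.
    { intros x Hx. set l := x / del.
      have Hl : 0 <= l <= 1. { unfold l; split; [apply Rdiv_le_0_compat; lra|apply div_le1; lra]. }
      replace (sb + (sa - sb) * l) with ((1 - l) * sb + l * sa) by ring. destruct Hsa, Hsb.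
      have Hm1 := Rmin_l sa sb. have Hm2 := Rmin_r sa sb. have Hm3 : 0 < Rmin sa sb by (apply Rmin_glb_lt; lra).
      have HM1 := Rmax_l sa sb. have HM2 := Rmax_r sa sb. have HM3 : Rmax sa sb < A e by (apply Rmax_lub_lt; lra).
      split; nra. }
    rewrite (mkE_eq _ _ (Hin r Hr)) (mkE_eq _ _ (Hin r' Hr')).
    eapply Rle_trans; [apply (@dist_edge V E src dst A HA Hconn)|].
    replace (sb + (sa - sb) * (r / del) - (sb + (sa - sb) * (r' / del))) with ((sa - sb) * ((r - r') / del))
      by (field; lra).
    rewrite Rabs_mult. unfold Rdiv. rewrite Rabs_mult.
    have -> : Rabs (/ del) = / del by (apply Rabs_pos_eq; left; apply Rinv_0_lt_compat; lra).
    have := Rabs_pos (r - r'). have := Rabs_pos (sa - sb).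
    have Hinv : 0 < / del by apply Rinv_0_lt_compat.
    have HX : Rabs (sa - sb) * / del <= 1 by (apply div_le1; lra).
    have -> : Rabs (sa - sb) * (Rabs (r - r') * / del) = (Rabs (sa - sb) * / del) * Rabs (r - r') by ring.
    nra.
Qed.

Lemma rm_range t : b <= t -> 0 <= rm t < P.
Proof.
  intros Ht. have HP := P_pos. unfold rm. set x := (t - b) / P.
  destruct (base_Int_part x) as [H1 H2].
  have Hx : t - b = P * x by (unfold x; field; lra).
  split; nra.
Qed.

Lemma rm_small t : b <= t < b + P -> rm t = t - b.
Proof.
  intros Ht. have HP := P_pos. unfold rm.
  have HI : Int_part ((t - b) / P) = 0%Z.
  { apply Int_part_unique. simpl. split.
    - apply Rdiv_le_0_compat; lra.
    - apply (Rmult_lt_reg_r P); [lra|]. replace ((t - b) / P * P) with (t - b) by (field; lra). lra. }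
  rewrite HI. simpl. ring.
Qed.

Lemma rm_shift t : rm (t + P) = rm t.
Proof.
  have HP := P_pos. unfold rm.
  replace ((t + P - b) / P) with ((t - b) / P + 1) by (field; lra).
  destruct (base_Int_part ((t - b) / P)) as [H1 H2].
  have HI : Int_part ((t - b) / P + 1) = (Int_part ((t - b) / P) + 1)%Z.
  { apply Int_part_unique. rewrite plus_IZR; lra. }
  rewrite HI plus_IZR; ring.
Qed.

Lemma pihat_le t : t <= b -> pihat t = pi t.
Proof. intros H; unfold pihat; destruct (Rle_dec t b); [auto|lra]. Qed.

Lemma rm_P : rm (b + P) = 0.
Proof.
  have HP := P_pos. unfold rm.
  replace ((b + P - b) / P) with 1 by (field; lra).
  have HI : Int_part 1 = 1%Z by (apply Int_part_unique; simpl; lra).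
  rewrite HI; simpl; ring.
Qed.

Lemma pihat_per t : b <= t -> pihat (t + P) = pihat t.
Proof.
  intros Ht. have HP := P_pos.
  destruct (Req_dec t b) as [->|Hne].
  - rewrite (pihat_le b); last lra. unfold pihat. destruct (Rle_dec (b + P) b); [lra|].
    rewrite rm_P. apply functional_extensionality; intros i. unfold seg.
    destruct (Rlt_dec 0 del); [|lra]. apply trans0.
  - unfold pihat. destruct (Rle_dec (t + P) b); [lra|]. destruct (Rle_dec t b); [lra|].
    rewrite rm_shift; auto.
Qed.

Lemma pihat_iter m t : b <= t -> pihat (t + INR m * P) = pihat t.
Proof.
  have HP := P_pos.
  induction m as [|m IH]; intros Ht.
  - simpl; replace (t + 0 * P) with t by ring; auto.
  - rewrite S_INR. replace (t + (INR m + 1) * P) with ((t + INR m * P) + P) by ring.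
    rewrite pihat_per; [apply IH; auto|]. have := pos_INR m; nra.
Qed.

Lemma pihat_loop t i : Nat.lt i k -> b <= t <= b + P ->
  pihat t i = if Rlt_dec (t - b) del then trans i (t - b) else pi (t - P) i.
Proof.
  intros Hi Ht. have HP := P_pos.
  destruct (Req_dec t (b + P)) as [->|Hne].
  - replace (b + P) with (b + P) by ring. rewrite pihat_per; last lra. rewrite pihat_le; last lra.
    destruct (Rlt_dec (b + P - b) del); [lra|]. congr (pi _ i); ring.
  - destruct (Req_dec t b) as [->|Hne'].
    + rewrite pihat_le; last lra. destruct (Rlt_dec (b - b) del); [|lra].
      simpl. replace (b - b) with 0 by ring. by rewrite trans0.
    + unfold pihat; destruct (Rle_dec t b); [lra|]. rewrite rm_small; last lra.
      unfold seg. destruct (Rlt_dec (t - b) del); auto. congr (pi _ i). unfold P; ring.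
Qed.

Lemma pihat_map n w i : Nat.lt i k -> a <= w <= b -> pihat (w + INR n * P) i = pi w i.
Proof.
  intros Hi Hw. have HP := P_pos.
  destruct n as [|n].
  - simpl. replace (w + 0 * P) with w by ring. rewrite pihat_le; [auto|lra].
  - rewrite S_INR. replace (w + (INR n + 1) * P) with ((w + P) + INR n * P) by ring.
    rewrite pihat_iter; last (unfold P in *; lra).
    rewrite (pihat_loop _ _ Hi); last (unfold P in *; lra).
    destruct (Rlt_dec (w + P - b) del); [unfold P in *; lra|]. congr (pi _ i); ring.
Qed.

Lemma pihat_decomp t : b < t -> exists n r, t = b + INR n * P + r /\ 0 <= r < P /\
  pihat t = pihat (b + r).
Proof.
  intros Ht. have HP := P_pos.
  set z := Int_part ((t - b) / P).
  have Hz : (0 <= z)%Z. { apply Int_part_nonneg. apply Rdiv_le_0_compat; lra. }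
  exists (Z.to_nat z), (rm t).
  have HI : INR (Z.to_nat z) = IZR z by rewrite INR_IZR_INZ Z2Nat.id.
  split; [|split; [apply rm_range; lra|]].
  - rewrite HI. unfold rm. fold z. ring.
  - have Et : t = (b + rm t) + INR (Z.to_nat z) * P by (rewrite HI; unfold rm; fold z; ring).
    rewrite {1}Et. apply pihat_iter. have := rm_range t (Rlt_le _ _ Ht); lra.
Qed.

Lemma pihat_lip i : Nat.lt i k -> forall t t', 0 <= t -> 0 <= t' ->
  d (pihat t i) (pihat t' i) <= Rabs (t - t').
Proof.
  intros Hi. have HP := P_pos. set g := fun t => pihat t i.
  have L1 : @LipOn V E src dst A g 0 b.
  { intros t t' Ht Ht'. unfold g; rewrite !pihat_le; try lra. apply pi_lip; auto; lra. }
  have L2 : @LipOn V E src dst A g b (b + del).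
  { have Hg : forall t, b <= t <= b + del -> g t = trans i (t - b).
    { intros t Ht. unfold g; rewrite (pihat_loop _ _ Hi); last (unfold P; lra).
      destruct (Rlt_dec (t - b) del); simpl; auto.
      have Htd : t - b = del by lra. rewrite Htd transD //. congr (pi _ i). unfold P; lra. }
    intros t t' Ht Ht'. rewrite !Hg; auto.
    replace (t - t') with ((t - b) - (t' - b)) by ring. apply trans_lip; auto; lra. }
  have L3 : @LipOn V E src dst A g (b + del) (b + P).
  { have Hg : forall t, b + del <= t <= b + P -> g t = pi (t - P) i.
    { intros t Ht. unfold g; rewrite (pihat_loop _ _ Hi); last lra.
      destruct (Rlt_dec (t - b) del); simpl; auto; lra. }
    intros t t' Ht Ht'. rewrite !Hg; auto.
    replace (t - t') with ((t - P) - (t' - P)) by ring. apply pi_lip; auto; unfold P in *; lra. }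
  have L23 := @lip_glue V E src dst A HA Hconn _ _ _ _ L2 L3.
  have Lper := @lip_periodic V E src dst A HA Hconn g b P (Rlt_trans _ _ _ Hdel HP) L23 (fun t Ht => f_equal (fun c => c i) (pihat_per t Ht)).
  intros t t' Ht Ht'.
  have Hm1 := Rmax_l t t'. have Hm2 := Rmax_r t t'.
  move: Hm1 Hm2; move: (Rmax t t') => m Hm1 Hm2.
  pose n := Z.to_nat (up (m / P)).
  have Hn : m <= INR n * P.
  { destruct (archimed (m / P)) as [H1 _].
    have Hup : (0 <= up (m / P))%Z.
    { apply le_IZR. have : 0 <= m / P. { apply Rdiv_le_0_compat; lra. } lra. }
    unfold n. rewrite INR_IZR_INZ Z2Nat.id //.
    have : m = (m / P) * P by (field; lra). nra. }
  have Lall := @lip_glue V E src dst A HA Hconn _ _ _ _ L1 (Lper n).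
  have Hn0 := pos_INR n.
  apply Lall; split; lra.
Qed.

Lemma pihat_feasible : feasible src dst k pihat.
Proof. apply feasible_of. intros i Hi; apply pihat_lip; auto. Qed.

Lemma pihat_periodic : periodic k pihat.
Proof.
  have HP := P_pos. exists b, P. split; [lra|split; [lra|]].
  intros t Ht i Hi. rewrite pihat_per; auto; lra.
Qed.


Lemma lat_visit (f : R -> config V A) v t x i : 0 <= x -> x <= t -> Nat.lt i k -> f x i = PNode A v ->
  latency k f v t <= t - x.
Proof.
  intros H0 H1 Hi Hx. unfold latency.
  have := @tau_visit V E A k f v t x H0 H1 (ex_intro _ i (conj Hi Hx)). lra.
Qed.

Lemma lat_mono (f : R -> config V A) v t t' : 0 <= t' -> t' <= t ->
  latency k f v t <= (t - t') + latency k f v t'.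
Proof.
  intros H0 H1. unfold latency. have := @tau_mono V E A k f v t t' H0 H1. lra.
Qed.

Lemma lat_end n v : latency k pihat v (b + INR n * P) <= latency k pi v b + del.
Proof.
  have HP := P_pos. have Hn := pos_INR n.
  have Hl := Hlatb v. unfold latency in Hl |- *.
  set tb := tau k pi v b in Hl |- *.
  have Hex : exists x, visit_times k pi v b x.
  { apply NNPP; intros Hn'. have := @tau_none V E A k pi v b Hn'. fold tb. lra. }
  have Heta : 0 < Rmin del (tb - a) by (apply Rmin_glb_lt; lra).
  destruct (@tau_approx V E A k pi v b _ Hex Heta) as (x&(Hx0&Hx1&i&Hi&Hx)&Hxt). fold tb in Hxt.
  have := Rmin_l del (tb - a). have := Rmin_r del (tb - a). intros Hm2 Hm1.
  have Hmap := pihat_map n x i Hi ltac:(lra).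
  have := lat_visit pihat v (b + INR n * P) (x + INR n * P) i ltac:(nra) ltac:(lra) Hi ltac:(rewrite Hmap; exact Hx).
  unfold latency. lra.
Qed.

Lemma pihat_lat t v : s0 <= t -> phi v * latency k pihat v t <= B + eps0.
Proof.
  intros Ht. have HP := P_pos. have Hph := Hphi v. have He := Heps v.
  destruct (Rle_dec t b) as [Htb|Htb].
  - have -> : latency k pihat v t = latency k pi v t.
    { unfold latency. f_equal. apply tau_ext. intros x; split.
      - intros (H0&H1&i&Hi&Hx). split; [|split]; auto. exists i; split; auto.
        rewrite -(pihat_le x); auto; lra.
      - intros (H0&H1&i&Hi&Hx). split; [|split]; auto. exists i; split; auto.
        rewrite (pihat_le x); auto; lra. }
    have := HB t Ht v. nra.
  - apply Rnot_le_lt in Htb.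
    destruct (pihat_decomp t Htb) as (n&r&Et&Hr&Ehat).
    have Hn := pos_INR n.
    have Hm := lat_mono pihat v t (b + INR n * P) ltac:(nra) ltac:(lra).
    have Hend := lat_end n v.
    have HBb := HB b ltac:(lra) v.
    destruct (Rlt_dec r del) as [Hrd|Hrd].
    + have : latency k pihat v t <= latency k pi v b + 2 * del by lra.
      nra.
    + apply Rnot_lt_le in Hrd.
      set u := a + r - del.
      have Hu : a <= u < b by (unfold u, P in *; lra).
      have Etu : t = u + INR (S n) * P by (rewrite S_INR; unfold u, P in *; lra).
      have HBu := HB u ltac:(lra) v.
      destruct (classic (exists x, visit_times k pi v u x /\ a <= x /\ tau k pi v u - del < x))
        as [(x&(Hx0&Hx1&i&Hi&Hx)&Hxa&Hxt)|HnA].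
      * have Hmap := pihat_map (S n) x i Hi ltac:(lra).
        have HSn := pos_INR (S n).
        have := lat_visit pihat v t (x + INR (S n) * P) i ltac:(nra) ltac:(lra) Hi ltac:(rewrite Hmap; exact Hx).
        intros Hlv.
        have : latency k pihat v t <= latency k pi v u + del by (unfold latency in *; lra).
        nra.
      * have Hiff : forall x, visit_times k pi v u x <-> visit_times k pi v a x.
        { intros x; split.
          - intros (H0&H1&Hx). destruct (Rlt_dec x a) as [Hxa|Hxa].
            + split; [|split]; auto; lra.
            + exfalso. apply Rnot_lt_le in Hxa.
              have Hex : exists y, visit_times k pi v u y by (exists x; split; auto).
              destruct (@tau_approx V E A k pi v u del Hex Hdel) as (w&Hw&Hwt).
              apply HnA. destruct (Rlt_dec w a) as [Hwa|Hwa].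
              * exists x; split; [split; auto|split; [auto|lra]].
              * exists w; split; [auto|split; [lra|auto]].
          - intros (H0&H1&Hx). split; [|split]; auto; lra. }
        have Htau := @tau_ext V E A k pi pi v u a Hiff.
        have : latency k pi v u = (u - a) + latency k pi v a by (unfold latency; rewrite Htau; ring).
        intros Hlu. have Hla := Hlat v.
        have : latency k pihat v t <= latency k pi v u + 3 * del by (unfold u in *; lra).
        nra.
Qed.

Lemma pihat_cost t : s0 <= t -> Mcost phi k pihat t <= B + eps0.
Proof. intros Ht; apply Mcost_le; [lra|]. intros v; apply pihat_lat; auto. Qed.

End Loop.

Lemma idx_close (del U x y : R) (X : nat) : 0 < del -> 0 <= x <= U -> 0 <= y <= U ->
  X = Z.to_nat (up (U / del)) ->
  (inord (Z.to_nat (Int_part (x / del))) : 'I_X.+1) = inord (Z.to_nat (Int_part (y / del))) ->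
  Rabs (x - y) < del.
Proof.
  intros Hd Hx Hy HX Heq.
  have Hbd : forall z, 0 <= z <= U -> (0 <= Int_part (z / del))%Z /\ (Z.to_nat (Int_part (z / del)) < X.+1)%nat.
  { intros z Hz. have Hz0 : 0 <= z / del by (apply Rdiv_le_0_compat; lra).
    split; [apply Int_part_nonneg; auto|].
    destruct (base_Int_part (z / del)) as [H1 _]. destruct (archimed (U / del)) as [H2 _].
    have HzU : z / del <= U / del by (apply Rmult_le_compat_r; [left; apply Rinv_0_lt_compat|]; lra).
    have : (Int_part (z / del) < up (U / del))%Z by (apply lt_IZR; lra).
    intros Hlt. rewrite HX. apply/ssrnat.ltP. have := Int_part_nonneg _ Hz0. lia. }
  destruct (Hbd x Hx) as [Hx0 Hx1]. destruct (Hbd y Hy) as [Hy0 Hy1].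
  have := f_equal (@nat_of_ord _) Heq. rewrite !inordK //. intros Hn.
  have HI : Int_part (x / del) = Int_part (y / del) by (apply Z2Nat.inj; auto).
  destruct (base_Int_part (x / del)) as [H1 H2]. destruct (base_Int_part (y / del)) as [H3 H4].
  rewrite HI in H1 H2.
  have Hxy : Rabs (x / del - y / del) < 1 by (apply Rabs_def1; lra).
  replace (x / del - y / del) with ((x - y) / del) in Hxy by (field; lra).
  unfold Rdiv in Hxy. rewrite Rabs_mult (Rabs_pos_eq (/ del)) in Hxy; [|left; apply Rinv_0_lt_compat; lra].
  apply (Rmult_lt_reg_r (/ del)); [apply Rinv_0_lt_compat; lra|]. rewrite Rinv_r; lra.
Qed.

Lemma key s0 B eps0 : 0 <= s0 -> 0 < eps0 -> (forall t, s0 <= t -> Mcost phi k pi t <= B) ->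
  exists ph : R -> config V A, feasible src dst k ph /\ periodic k ph /\
    forall t, s0 <= t -> Mcost phi k ph t <= B + eps0.
Proof.
  intros Hs0 He0 HBm.
  have HB0 : 0 <= B by (have := HBm s0 (Rle_refl _); have := Mcost_nonneg pi s0; lra).
  have HBv : forall t, s0 <= t -> forall v, phi v * latency k pi v t <= B.
  { intros t Ht v; have := Mcost_ge pi t v; have := HBm t Ht; lra. }
  have inV : forall v : V, List.In v (enum V) by (intros v; apply in_In; by rewrite mem_enum).
  have inE : forall e : E, List.In e (enum E) by (intros e; apply in_In; by rewrite mem_enum).
  set Mx := List.fold_right Rmax 0 (List.map phi (enum V)) + 1.
  have HMx : forall v, phi v <= Mx by (intros v; have := fold_max_ge _ phi _ _ (inV v); unfold Mx; lra).
  have HMx0 : 0 < Mx by (have := fold_max_nonneg _ phi (enum V); unfold Mx; lra).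
  set Mi := List.fold_right Rmax 0 (List.map (fun v => / phi v) (enum V)) + 1.
  have HMi : forall v, / phi v <= Mi by (intros v; have := fold_max_ge _ (fun v => / phi v) _ _ (inV v); unfold Mi; lra).
  set Amax := List.fold_right Rmax 0 (List.map A (enum E)) + 1.
  have HAm : forall e, A e <= Amax by (intros e; have := fold_max_ge _ A _ _ (inE e); unfold Amax; lra).
  set del := eps0 / (3 * Mx).
  have Hdel : 0 < del by (unfold del; apply Rdiv_lt_0_compat; lra).
  have Heps : forall v, phi v * (3 * del) <= eps0.
  { intros v. have := HMx v. have := Hphi v. have -> : eps0 = Mx * (3 * del) by (unfold del; field; lra). nra. }
  set C0 := B * Mi + 1.
  have HMi0 : 0 <= Mi by (have := fold_max_nonneg _ (fun v => / phi v) (enum V); unfold Mi; lra).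
  have HC0 : 0 < C0 by (unfold C0; nra).
  have Hlatr : forall t, s0 <= t -> forall v, 0 <= latency k pi v t < C0.
  { intros t Ht v. have Hph := Hphi v. split.
    - unfold latency; have := @tau_bound V E A k pi v t ltac:(lra); lra.
    - have H1 := HBv t Ht v. have H2 := HMi v.
      have : latency k pi v t <= B * / phi v.
      { apply (Rmult_le_reg_l (phi v)); auto. rewrite -Rmult_assoc (Rmult_comm _ B) Rmult_assoc Rinv_r; lra. }
      unfold C0; nra. }
  set tn := fun n : nat => s0 + INR n * C0.
  have Htn : forall n, s0 <= tn n by (intros n; unfold tn; have := pos_INR n; nra).
  set N := Z.to_nat (up (Amax / del)).
  set M := Z.to_nat (up (C0 / del)).
  pose idx (X : nat) (x : R) : 'I_X.+1 := inord (Z.to_nat (Int_part (x / del))).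
  pose F := ({ffun 'I_k -> ((V + E) * 'I_N.+1)%type} * {ffun V -> 'I_M.+1})%type.
  pose st (n : nat) : F := ([ffun i : 'I_k => (tagp (pi (tn n) i), idx N (sofp (pi (tn n) i)))],
                             [ffun v => idx M (latency k pi v (tn n))]).
  pose g (o : 'I_(#|{: F}|.+1)) : F := st o.
  have Hni : ~ ssrfun.injective g.
  { intros Hinj. have := leq_card g Hinj. rewrite card_ord. by rewrite ssrnat.ltnn. }
  have [na [nb [Hnab Hst]]] : exists na nb, (na < nb)%coq_nat /\ st na = st nb.
  { apply NNPP; intros Hn; apply Hni. intros o1 o2 Hg. apply val_inj. unfold g in Hg.
    destruct (Nat.lt_trichotomy (val o1) (val o2)) as [H|[H|H]]; auto; exfalso; apply Hn.
    - exists (val o1), (val o2); auto.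
    - exists (val o2), (val o1); auto. }
  set a := tn na. set b := tn nb.
  have Hab : a + C0 <= b.
  { unfold a, b, tn. have : (INR na + 1 <= INR nb) by (rewrite -S_INR; apply le_INR; lia). nra. }
  have Ha : s0 <= a by apply Htn.
  have Hb : s0 <= b by apply Htn.
  have Hrob : forall i, Nat.lt i k -> tagp (pi a i) = tagp (pi b i) /\
      idx N (sofp (pi a i)) = idx N (sofp (pi b i)).
  { intros i Hi. have Hik : (i < k)%nat by apply/ssrnat.ltP.
    have := f_equal (fun s : F => (fst s) (Ordinal Hik)) Hst. simpl. rewrite !ffunE. simpl.
    intros Heq; injection Heq; auto. }
  have Hsof : forall p : point V A, 0 <= sofp p <= Amax.
  { have := fold_max_nonneg _ A (enum E). intros HA0.
    intros [v|e s Hs]; simpl; [unfold Amax; lra|]. have := HAm e; lra. }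
  have Hpos : forall i, Nat.lt i k -> Rabs (sofp (pi a i) - sofp (pi b i)) < del.
  { intros i Hi. apply (idx_close del Amax _ _ N Hdel (Hsof _) (Hsof _) (Logic.eq_refl _) (proj2 (Hrob i Hi))). }
  have Hlatc : forall v, Rabs (latency k pi v a - latency k pi v b) < del.
  { intros v. have := f_equal (fun s : F => (snd s) v) Hst. simpl. rewrite !ffunE. intros Heq.
    have := Hlatr a Ha v. have := Hlatr b Hb v. intros H1 H2.
    apply (idx_close del C0 (latency k pi v a) (latency k pi v b) M Hdel ltac:(lra) ltac:(lra) (Logic.eq_refl _) Heq). }
  have Hlat : forall v, latency k pi v b < latency k pi v a + del.
  { intros v. have := Hlatc v. have := Rle_abs (latency k pi v b - latency k pi v a).
    rewrite Rabs_minus_sym. lra. }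
  have Hlatb : forall v, latency k pi v b < b - a.
  { intros v. have := Hlatr b Hb v. lra. }
  have Hab' : a < b by lra.
  exists (pihat a b del). split; [|split].
  - exact (pihat_feasible s0 a b del Hs0 Ha Hab' Hdel (fun i Hi => proj1 (Hrob i Hi)) Hpos).
  - exact (pihat_periodic s0 a b del Hs0 Ha Hab' Hdel).
  - exact (pihat_cost s0 B eps0 a b del Hs0 Ha Hab' Hdel Hlat Hlatb HBv Heps HB0 (Rlt_le _ _ He0)).
Qed.

End Main.

Lemma sup_from_ge {V E : finType} {A : E -> R} (phi : V -> R) k (f : R -> config V A) {s t} :
  s <= t -> Rbar_le (Finite (Mcost phi k f t)) (sup_from phi k f s).
Proof. intros H; apply lub_ge; exists t; split; auto. Qed.

Lemma sup_from_fin {V E : finType} {A : E -> R} (phi : V -> R) k (f : R -> config V A) {s} :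
  Rbar_lt (sup_from phi k f s) p_infty ->
  exists B, sup_from phi k f s = Finite B /\ 0 <= B /\ forall t, s <= t -> Mcost phi k f t <= B.
Proof.
  intros H. have H0 := sup_from_ge phi k f (Rle_refl s).
  have Hn : 0 <= Mcost phi k f s by apply fold_max_nonneg.
  destruct (sup_from phi k f s) as [B| |] eqn:EB; simpl in H, H0; try tauto.
  exists B; split; [auto|split; [lra|]].
  intros t Ht; have := sup_from_ge phi k f Ht; rewrite EB; simpl; auto.
Qed.

Lemma sup_from_le {V E : finType} {A : E -> R} (phi : V -> R) k (f : R -> config V A) {s c} :
  (forall t, s <= t -> Mcost phi k f t <= c) -> Rbar_le (sup_from phi k f s) (Finite c).
Proof. intros H; apply lub_le; intros x [t [Ht ->]]; auto. Qed.

Theorem mainTheorem3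
  (V E : finType) (src dst : E -> V) (A : E -> R) (phi : V -> R)
  (HA : forall e, 0 < A e) (Hphi : forall v, 0 < phi v)
  (Hconn : connected_graph src dst)
  (k : nat) (Hk : Nat.le 1 k)
  (T : Rbar) (HT : T = p_infty \/ exists r, T = Finite r /\ 0 <= r)
  (pi : R -> config V A) (Hpi : feasible src dst k pi)
  (HJ : Rbar_lt (Jcost phi T k pi) p_infty)
  (dtol : R) (Hd : 0 < dtol) :
  exists pihat : R -> config V A,
    feasible src dst k pihat /\ periodic k pihat /\
    Rbar_le (Jcost phi T k pihat)
            (Rbar_plus (Jcost phi T k pi) (Finite dtol)).
Proof.
  have Hd2 : 0 < dtol / 2 by lra.
  destruct HT as [->|[r [-> Hr]]].
  - simpl in HJ |- *.
    set S := fun y => exists s, 0 <= s /\ y = sup_from phi k pi s.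
    have HG : Rbar_is_glb S (Rbar_glb S) := proj2_sig (Rbar_ex_glb S).
    fold S in HJ |- *.
    have H0 : Rbar_le (Finite 0) (Rbar_glb S).
    { apply (proj2 HG). intros y [s [Hs ->]].
      have := sup_from_ge phi k pi (Rle_refl s). have : 0 <= Mcost phi k pi s by apply fold_max_nonneg.
      destruct (sup_from phi k pi s); simpl; auto; lra. }
    destruct (Rbar_glb S) as [J0| |] eqn:EJ; simpl in HJ, H0; try tauto.
    have [s [Hs Hsl]] : exists s, 0 <= s /\ Rbar_lt (sup_from phi k pi s) (Finite (J0 + dtol / 2)).
    { apply NNPP; intros Hn.
      have : Rbar_le (Finite (J0 + dtol / 2)) (Finite J0).
      { apply (proj2 HG). intros y [s [Hs ->]].
        destruct (Rbar_lt_le_dec (sup_from phi k pi s) (Finite (J0 + dtol / 2))) as [Hl|Hl]; auto.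
        exfalso; apply Hn; exists s; auto. }
      simpl; lra. }
    have Hlt : Rbar_lt (sup_from phi k pi s) p_infty by (destruct (sup_from phi k pi s); simpl in *; auto).
    destruct (sup_from_fin phi k pi Hlt) as [B [EB [HB0 HB]]].
    rewrite EB in Hsl; simpl in Hsl.
    destruct (key V E src dst A phi HA Hphi Hconn k pi Hpi s B (dtol / 2) Hs Hd2 HB) as [ph [Hf [Hp Hc]]].
    exists ph; split; [auto|split; [auto|]].
    set S' := fun y => exists s, 0 <= s /\ y = sup_from phi k ph s.
    have HG' : Rbar_is_glb S' (Rbar_glb S') := proj2_sig (Rbar_ex_glb S').
    have Hle1 : Rbar_le (Rbar_glb S') (sup_from phi k ph s) by (apply (proj1 HG'); exists s; auto).
    have Hle2 := sup_from_le phi k ph (c := B + dtol / 2) Hc.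
    have := Rbar_le_trans _ _ _ Hle1 Hle2. simpl.
    destruct (Rbar_glb S'); simpl; auto; lra.
  - simpl in HJ |- *.
    destruct (sup_from_fin phi k pi HJ) as [B [EB [HB0 HB]]].
    rewrite EB; simpl.
    destruct (key V E src dst A phi HA Hphi Hconn k pi Hpi r B (dtol / 2) Hr Hd2 HB) as [ph [Hf [Hp Hc]]].
    exists ph; split; [auto|split; [auto|]].
    have := sup_from_le phi k ph (c := B + dtol / 2) Hc.
    destruct (sup_from phi k ph r); simpl; auto; lra.
Qed.
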